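(* Let $G$ be a simple graph, $\mathcal P$ a path-circular collection of $G$, and $p=u_1,u_2,\ldots,u_k$ a path in $\mathcal P$. Write $V(G)=\{u_1,\ldots,u_k,v_{k+1},\ldots,v_r\}$ and $\mathcal A=(N(u_1),\ldots,N(u_k),N(v_{k+1}),\ldots,N(v_r))$, a presentation of $M(\mathcal P)$. Then the path $p$, viewed as a graph with vertices $u_1,\ldots,u_k$ and edges $\{u_i,u_{i+1}\}$, is a minimal $(p,\mathcal A)$-presenting graph, with presenting map $u_i\mapsto i$.
   Context: A path of $G$ is the ordered list of its distinct vertices, consecutive ones adjacent. A path-circular collection $\mathcal P$ of $G$ is a collection of (not necessarily distinct) paths of $G$ such that whenever $w_1,\ldots,w_m$ are the vertices in order of a path in $\mathcal P$ and $i\in\{2,\ldots,m-1\}$: (i) $w_i$ has degree $2$ in $G$, and (ii) every path of $\mathcal P$ containing $w_i$ also contains $w_1$ or $w_m$. For a vertex $v$, $N(v)=\{q\in\mathcal P: v\in q\}$; $M(\mathcal P)$ is the transversal matroid on ground set $\mathcal P$ whose independent sets are the partial transversals of $(N(v))_{v\in V(G)}$. For a transversal matroid $M$ with presentation $\mathcal A=(A_1,\ldots,A_r)$ and $e\in E(M)$, a graph $H$ is $(e,\mathcal A)$-presenting if there is a bijection $\phi:V(H)\to\{i: e\in A_i\}$ such that for all distinct $x,y\in V(H)$ the subgraph induced by $\{z\in V(H): A_{\phi(z)}\subseteq\mathrm{cl}^*_M(A_{\phi(x)}\cup A_{\phi(y)})\}$ is connected ($\mathrm{cl}^*_M$ the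 closure in $M^*$); it is minimal if deleting any one edge gives a graph that is not $(e,\mathcal A)$-presenting. *)

(* Defs.v *)
From mathcomp Require Import all_boot.
Set Implicit Arguments. Unset Strict Implicit. Unset Printing Implicit Defensive.

Definition simple_graph (V : finType) (g : rel V) : Prop :=
  symmetric g /\ irreflexive g.

Definition degree (V : finType) (g : rel V) (v : V) : nat := #|[set x | g v x]|.

Definition is_path (V : finType) (g : rel V) (s : seq V) : Prop :=
  s <> [::] /\ uniq s /\ (forall a b, (a, b) \in zip s (behead s) -> g a b).

(* Path-circular collection, indexed by a finite type I (repetitions allowed). *)
Definition path_circular (V I : finType) (g : rel V) (q : I -> seq V) : Prop :=
  forall j, is_path g (q j) /\
   forall x0 : V, forall i, 0 < i < (size (q j)).-1 ->
     let w := nth x0 (q j) i in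
     degree g w = 2 /\
     forall j', w \in q j' ->
       (head x0 (q j) \in q j') || (last x0 (q j) \in q j').

Definition Nb (V I : finType) (q : I -> seq V) (v : V) : {set I} :=
  [set j | v \in q j].

Definition tindep (E J : finType) (A : J -> {set E}) (X : {set E}) : bool :=
  [exists f : {ffun E -> J},
     [forall x in X, x \in A (f x)] &&
     [forall x in X, forall y in X, (f x == f y) ==> (x == y)]].

Definition trank (E J : finType) (A : J -> {set E}) (S : {set E}) : nat :=
  \max_(X : {set E} | (X \subset S) && tindep A X) #|X|.

Definition tdual_rank (E J : finType) (A : J -> {set E}) (S : {set E}) : nat :=
  #|S| + trank A (~: S) - trank A setT.

Definition tdual_cl (E J : finType) (A : J -> {set E}) (S : {set E}) : {set E} :=
  [set x | tdual_rank A (x |: S) == tdual_rank A S].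

Definition induced_connected (W : finType) (h : rel W) (Z : {set W}) : Prop :=
  forall a b, a \in Z -> b \in Z ->
    connect [rel x y | [&& h x y, x \in Z & y \in Z]] a b.

Definition presenting (E J W : finType) (A : J -> {set E}) (e : E)
    (h : rel W) (phi : W -> J) : Prop :=
  injective phi /\ (forall j, (e \in A j) <-> exists w, phi w = j) /\
  forall x y, x != y ->
    induced_connected h
      [set z | A (phi z) \subset tdual_cl A (A (phi x) :|: A (phi y))].

Definition delete_edge (W : finType) (h : rel W) (x y : W) : rel W :=
  [rel a b | h a b && ([set a; b] != [set x; y])].

Definition exists_presenting (E J W : finType) (A : J -> {set E}) (e : E)
    (h : rel W) : Prop := exists phi : W -> J, presenting A e h phi.

Definition minimal_presenting (E J W : finType) (A : J -> {set E}) (e : E)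
    (h : rel W) (phi : W -> J) : Prop :=
  presenting A e h phi /\
  forall x y, h x y -> ~ exists_presenting A e (delete_edge h x y).

Definition path_rel (V : finType) (s : seq V) : rel {x : V | x \in s} :=
  fun a b => ((val a, val b) \in zip s (behead s)) ||
             ((val b, val a) \in zip s (behead s)).
Arguments path_rel [V] s _ _.

(* Main.v *)
Require Import Defs.
From mathcomp Require Import all_boot.
From mathcomp Require Import zify.
Set Implicit Arguments. Unset Strict Implicit. Unset Printing Implicit Defensive.

Lemma zipb_nth (T : eqType) (s : seq T) c d :
  (c, d) \in zip s (behead s) ->
  exists m, m.+1 < size s /\ c = nth c s m /\ d = nth c s m.+1.
Proof.
elim: s => [|x s IH] //=.
case: s IH => [|y r] IH //=.
rewrite in_cons => /orP [/eqP [hc hd]|H].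
  by exists 0; rewrite hc hd.
have [m [h1 [h2 h3]]] := IH H.
by exists m.+1; split => //.
Qed.

Lemma nth_zipb (T : eqType) (s : seq T) x0 m :
  m.+1 < size s -> (nth x0 s m, nth x0 s m.+1) \in zip s (behead s).
Proof.
elim: s m => [|x s IH] m //=.
case: s IH => [|y r] IH //= Hm.
case: m Hm => [|m] Hm; first by rewrite in_cons eqxx.
by rewrite in_cons IH ?orbT.
Qed.

Lemma zipb_mem2 (T : eqType) (s : seq T) c d :
  (c, d) \in zip s (behead s) -> (c \in s) /\ (d \in s).
Proof.
move=> /zipb_nth [m [h1 [-> ->]]].
by split; apply: mem_nth => //; apply: ltnW.
Qed.

Lemma const_along (T : eqType) (P : pred T) (s : seq T) :
  (forall c d, (c, d) \in zip s (behead s) -> P c = P d) ->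
  forall x0 a, a \in s -> P a = P (head x0 s).
Proof.
elim: s => [|x s IH] // H x0 a.
rewrite in_cons => /orP [/eqP -> //|ha] /=.
case: s IH H ha => [|y r] IH H ha //=.
have Hxy : P x = P y by apply: H; rewrite /= in_cons eqxx.
rewrite Hxy; apply: (IH _ x0 a) => //.
by move=> c d hcd; apply: H; rewrite /= in_cons hcd orbT.
Qed.

Lemma cross (V : eqType) (g : rel V) (s t : seq V) x0 i j :
  symmetric g -> uniq s ->
  (forall m v, 0 < m < (size s).-1 -> g (nth x0 s m) v ->
       v = nth x0 s m.-1 \/ v = nth x0 s m.+1) ->
  (forall c d, (c, d) \in zip t (behead t) -> g c d) ->
  i < j < size s ->
  forall a b, a \in t -> b \in t -> i < index a s < j -> ~~ (i < index b s < j) ->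
  (nth x0 s i \in t) || (nth x0 s j \in t).
Proof.
move=> gs us nb tadj /andP [hij hjs] a b ha hb Ra Rb.
case: (boolP (nth x0 s i \in t)) => // hi.
case: (boolP (nth x0 s j \in t)) => // hj.
exfalso.
pose R := [pred v | i < index v s < j].
have aux : forall c d, g c d -> d \in t -> R c -> ~~ R d -> False.
  move=> c d gcd dt Rc Rd.
  rewrite /= in Rc Rd.
  set m := index c s in Rc.
  have ms : m < size s by lia.
  have cm : c = nth x0 s m by rewrite nth_index // -index_mem.
  rewrite cm in gcd.
  have [hd|hd] := nb m d ltac:(lia) gcd; rewrite hd in Rd dt.
  - rewrite index_uniq // in Rd; last by lia.
    have e : m.-1 = i by lia.
    by rewrite e (negbTE hi) in dt.
  - rewrite index_uniq // in Rd; last by lia.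
    have e : m.+1 = j by lia.
    by rewrite e (negbTE hj) in dt.
have C : forall c d, (c, d) \in zip t (behead t) -> R c = R d.
  move=> c d hcd.
  have [ct dt] := zipb_mem2 hcd.
  have gcd := tadj _ _ hcd.
  case Rc: (R c); case Rd: (R d) => //.
  - by exfalso; apply: (aux c d) => //; rewrite Rd.
  - by exfalso; apply: (aux d c) => //; [rewrite gs | rewrite Rc].
have e1 := const_along C x0 ha; have e2 := const_along C x0 hb.
rewrite -e2 /= in e1.
by move: e1; rewrite Ra (negbTE Rb).
Qed.


Lemma nbr_of_deg (V : finType) (g : rel V) (s : seq V) x0 m v :
  symmetric g -> uniq s ->
  (forall c d, (c, d) \in zip s (behead s) -> g c d) ->
  0 < m < (size s).-1 -> degree g (nth x0 s m) = 2 ->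
  g (nth x0 s m) v -> v = nth x0 s m.-1 \/ v = nth x0 s m.+1.
Proof.
move=> gs us adj hm deg gv.
have hm1 : m < size s by lia.
have hm2 : m.+1 < size s by lia.
have h1 : g (nth x0 s m) (nth x0 s m.-1).
  rewrite gs; apply adj.
  have := @nth_zipb _ s x0 m.-1; rewrite prednK; last by lia.
  by apply.
have h2 : g (nth x0 s m) (nth x0 s m.+1) by apply adj; apply: nth_zipb.
have ne : nth x0 s m.-1 != nth x0 s m.+1.
  rewrite nth_uniq //; first by lia.
  exact: leq_ltn_trans (leq_pred m) hm1.
have E : [set nth x0 s m.-1; nth x0 s m.+1] == [set x | g (nth x0 s m) x].
  rewrite eqEcard; apply/andP; split.
    by apply/subsetP => z; rewrite !inE => /orP [/eqP ->|/eqP ->].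
  by rewrite cards2 ne -deg.
have : v \in [set x | g (nth x0 s m) x] by rewrite inE.
rewrite -(eqP E) !inE => /orP [/eqP ->|/eqP ->]; by [left|right].
Qed.

Lemma cl_sub (E J : finType) (A : J -> {set E}) (S : {set E}) :
  S \subset tdual_cl A S.
Proof.
apply/subsetP => e he; rewrite inE.
have -> : e |: S = S by apply/setUidPr; rewrite sub1set.
by [].
Qed.

Lemma path_rel_idx (V : finType) (s : seq V) (u v : {x : V | x \in s}) :
  uniq s -> path_rel s u v ->
  index (val v) s = (index (val u) s).+1 \/ index (val u) s = (index (val v) s).+1.
Proof.
move=> us; rewrite /path_rel => /orP [] /zipb_nth [m [hm [hc hd]]].
- left; rewrite hd {2}hc !index_uniq //; lia.
- right; rewrite hd {2}hc !index_uniq //; lia.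
Qed.

Lemma idx_inj (V : finType) (s : seq V) (u v : {x : V | x \in s}) :
  index (val u) s = index (val v) s -> u = v.
Proof.
move=> H; apply: val_inj.
by rewrite -(nth_index (val u) (valP u)) -(nth_index (val u) (valP v)) H.
Qed.

Lemma path_Z_conn (V I : finType) (g : rel V) (q : I -> seq V) (p : I)
  (C : {set I}) :
  simple_graph g -> path_circular g q ->
  induced_connected (path_rel (q p)) [set z | Nb q (val z) \subset C].
Proof.
move=> [gs gi] pc.
set s := q p.
set sz := size s.
have [[sne [us sadj]] pcp] := pc p.
set Z := [set z | _].
have symr : symmetric [rel x y | [&& path_rel s x y, x \in Z & y \in Z]].
  move=> u v /=; apply/idP/idP => /and3P [h1 h2 h3]; apply/and3P; split => //;
  by move: h1; rewrite /path_rel orbC.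
move=> a b.
wlog: a b / index (val a) s <= index (val b) s.
  move=> H ha hb; case: (leqP (index (val a) s) (index (val b) s)) => hab.
    exact: H.
  rewrite (sym_connect_sym symr); apply: H => //; exact: ltnW.
move=> hab ha hb.
set x0 := val a.
set ia := index (val a) s; set ib := index (val b) s.
have ias : ia < size s by rewrite index_mem (valP a).
have ibs : ib < size s by rewrite index_mem (valP b).
pose w m : {x | x \in s} := insubd a (nth x0 s m).
have valw : forall m, m < size s -> val (w m) = nth x0 s m.
  by move=> m hm; rewrite val_insubd mem_nth.
have wa : w ia = a by apply: val_inj; rewrite valw // nth_index // (valP a).
have wb : w ib = b by apply: val_inj; rewrite valw // nth_index // (valP b).
have nbr : forall m v, 0 < m < (size s).-1 -> g (nth x0 s m) v ->
    v = nth x0 s m.-1 \/ v = nth x0 s m.+1.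
  move=> m v hm; apply: nbr_of_deg => //.
  by have := pcp x0 m hm => /= [[]].
have inZ : forall m, ia <= m <= ib -> w m \in Z.
  move=> m hm.
  case: (eqVneq m ia) => [->|n1]; first by rewrite wa.
  case: (eqVneq m ib) => [->|n2]; first by rewrite wb.
  have hms : m < size s by (try rewrite -/sz); lia.
  have hm' : 0 < m < (size s).-1 by (try rewrite -/sz); lia.
  rewrite inE; apply/subsetP => j; rewrite inE valw // => hj.
  have [_ hcirc] := pcp x0 m hm'.
  have hend := hcirc j hj.
  have [[_ [_ tadj]] _] := pc j.
  have Rm : ia < index (nth x0 s m) s < ib by rewrite index_uniq //; (try rewrite -/sz); lia.
  have hijs : ia < ib < size s by (try rewrite -/sz); lia.
  have key : (nth x0 s ia \in q j) || (nth x0 s ib \in q j).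
    case/orP: hend => hend.
    - apply: (cross gs us nbr tadj hijs hj hend Rm).
      rewrite -[head x0 s]/(nth x0 s 0) index_uniq //. (try rewrite -/sz); lia.
    - apply: (cross gs us nbr tadj hijs hj hend Rm).
      rewrite -nth_last index_uniq //; (try rewrite -/sz); lia.
  move: ha hb; rewrite !inE => ha hb.
  case/orP: key => hk.
  - by apply: (subsetP ha); rewrite inE -(nth_index x0 (valP a)).
  - by apply: (subsetP hb); rewrite inE -(nth_index x0 (valP b)).
have step : forall n, ia + n <= ib ->
    connect [rel x y | [&& path_rel s x y, x \in Z & y \in Z]] a (w (ia + n)).
  elim=> [|n IH] hn; first by rewrite addn0 wa connect0.
  apply: (connect_trans (IH ltac:((try rewrite -/sz); lia))); apply: connect1.
  rewrite /= !inZ ?andbT; try by (try rewrite -/sz); lia.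
  rewrite /path_rel !valw; try by (try rewrite -/sz); lia.
  by rewrite addnS nth_zipb //; (try rewrite -/sz); lia.
have := step (ib - ia) ltac:((try rewrite -/sz); lia).
by rewrite subnKC // wb.
Qed.

Lemma ar1 (a b c d : nat) : b = a.+1 -> d = c.+1 -> minn c d = minn a b -> c = a /\ d = b.
Proof. lia. Qed.
Lemma ar2 (a b m : nat) : b = a.+1 -> minn a b != m -> (a <= m) = (b <= m).
Proof. move=> h1 h2; apply/idP/idP; lia. Qed.
Lemma ar3 (a b : nat) : b = a.+1 -> (a <= minn a b) = (b <= minn a b) -> False.
Proof. move=> h; rewrite h; have -> : minn a a.+1 = a by lia. lia. Qed.

Unset Implicit Arguments.

Theorem lemma4p2 (V I : finType) (g : rel V) (q : I -> seq V) (p : I) :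
  simple_graph g -> path_circular g q ->
  minimal_presenting (fun v : V => Nb q v) p (path_rel (q p))
    (fun w : {x : V | x \in q p} => val w).
Proof.
move=> sg pc.
have [[sne [us sadj]] pcp] := pc p.
split.
  split; first exact: val_inj.
  split.
    move=> j; rewrite /Nb inE; split.
      by move=> H; exists (exist _ j H).
    by case=> w <-; exact: (valP w).
  move=> x y _.
  exact: (path_Z_conn sg pc).
move=> x y hxy [phi [_ [_ Hc]]].
set s := q p in us hxy *.
set ix := index (val x) s; set iy := index (val y) s.
have hxy' := path_rel_idx us hxy.
have nxy : x != y.
  by apply/eqP => E; move: hxy'; rewrite /ix /iy E; lia.
set m := minn ix iy.
set A := fun v : V => Nb q v.
set Z' := [set z | A (phi z) \subset tdual_cl A (A (phi x) :|: A (phi y))].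
have xZ : x \in Z'.
  by rewrite inE; apply: subset_trans (cl_sub _ _); apply: subsetUl.
have yZ : y \in Z'.
  by rewrite inE; apply: subset_trans (cl_sub _ _); apply: subsetUr.
have con := Hc x y nxy x y xZ yZ.
pose P := [pred v : {x : V | x \in s} | index (val v) s <= m].
have cl : closed [rel u v | [&& delete_edge (path_rel s) x y u v, u \in Z' & v \in Z']] P.
  move=> u v /and3P [/andP [huv hne] _ _].
  have huv' := path_rel_idx us huv.
  rewrite !inE.
  case: (eqVneq (minn (index (val u) s) (index (val v) s)) m) => hm.
    exfalso; move/negP: hne; apply; apply/eqP.
    rewrite /m /ix /iy in hm.
    case: hxy' => h1; case: huv' => h2.
    - have [e1 e2] := ar1 h1 h2 hm.
      by rewrite (idx_inj e1) (idx_inj e2).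
    - rewrite minnC in hm; have [e1 e2] := ar1 h1 h2 hm.
      by rewrite (idx_inj e1) (idx_inj e2) setUC.
    - rewrite [minn (index _ _) (index (val y) _)]minnC in hm.
      have [e1 e2] := ar1 h1 h2 hm.
      by rewrite (idx_inj e1) (idx_inj e2) setUC.
    - rewrite minnC [minn (index _ _) (index (val y) _)]minnC in hm.
      have [e1 e2] := ar1 h1 h2 hm.
      by rewrite (idx_inj e1) (idx_inj e2).
  case: huv' => h2.
  - exact: ar2 h2 hm.
  - by rewrite minnC in hm; rewrite (ar2 h2 hm).
have := closed_connect cl con.
rewrite !inE /m /ix /iy.
case: hxy' => h.
- exact: ar3 h.
- by rewrite minnC => e; apply: (ar3 h); rewrite e.
Qed.
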